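(* Let $(X,d)$ be a compact metric space and $f_{0,\infty}=\{f_n\}_{n=0}^\infty$ a sequence of continuous self-maps of $X$. Let $N\ge2$ and let $V_1,\dots,V_N$ be nonempty, closed, mutually disjoint subsets of $X$ such that \[f_n(V_i)\supset\bigcup_{j=1}^{N}V_j\quad\text{for all }1\le i\le N,\ n\ge0.\] Then $h_A(f_{0,\infty})\geq\log N$ for every $A\in\mathcal{S}$.
   Context: $f_i^n=f_{i+n-1}\circ\cdots\circ f_i$ ($n\ge1$), $f_i^0=\mathrm{id}$, $f_i^{-n}(B)=(f_i^n)^{-1}(B)$. $\mathcal S$ is the set of strictly increasing sequences $A=\{a_i\}_{i\ge1}$ of nonnegative integers. For finite open covers, $\bigvee_{i=1}^n\mathscr A_i=\{\bigcap_i U_i:U_i\in\mathscr A_i\}$, $f_0^{-a}\mathscr A=\{f_0^{-a}(U):U\in\mathscr A\}$, $\mathcal N(\cdot)$ is the minimal cardinality of a subcover, and $h_A(f_{0,\infty})=\sup_{\mathscr A}\limsup_{n\to\infty}\frac1n\log\mathcal N(\bigvee_{i=1}^n f_0^{-a_i}\mathscr A)$ over finite open covers $\mathscr A$ of $X$. $\log$ is the natural logarithm. *)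

(* Defs.v *)
From HB Require Import structures.
From mathcomp Require Import all_boot all_order all_algebra.
From mathcomp Require Import all_classical all_reals all_analysis.
Set Implicit Arguments. Unset Strict Implicit. Unset Printing Implicit Defensive.
Import Order.TTheory GRing.Theory Num.Theory.
Local Open Scope classical_set_scope.
Local Open Scope ring_scope.

Section Defs.
Context {X : Type}.

Fixpoint nonaut_iter (f : nat -> X -> X) (i n : nat) : X -> X :=
  match n with
  | 0 => id
  | n'.+1 => f (i + n')%N \o nonaut_iter f i n'
  end.

Definition seq_join (f : nat -> X -> X) (a : nat -> nat) (C : set (set X)) (n : nat)
  : set (set X) :=
  [set W | exists g : 'I_n -> set X,
      (forall i, C (g i)) /\ W = \bigcap_(i in [set: 'I_n]) (nonaut_iter f 0 (a i) @^-1` g i)].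

Definition has_subcover_card (D : set (set X)) (k : nat) : Prop :=
  exists g : 'I_k -> set X, (forall i, D (g i)) /\ \bigcup_(i in [set: 'I_k]) g i = setT.

Definition min_subcover (D : set (set X)) : nat :=
  xget 0%N [set k | has_subcover_card D k /\ forall m, has_subcover_card D m -> (k <= m)%N].

End Defs.

Definition finite_open_cover {X : topologicalType} (C : set (set X)) : Prop :=
  finite_set C /\ (forall U, C U -> open U) /\ \bigcup_(U in C) U = setT.

Definition seq_entropy {R : realType} {X : topologicalType}
  (f : nat -> X -> X) (a : nat -> nat) : \bar R :=
  ereal_sup [set limn_esup (fun n : nat =>
                 ((n%:R)^-1 * ln ((min_subcover (seq_join f a C n))%:R) : R)%:E)
            | C in @finite_open_cover X].

(* Main.v *)
Require Import Defs.
From HB Require Import structures.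
From mathcomp Require Import all_boot all_order all_algebra.
From mathcomp Require Import all_classical all_reals all_analysis.
Import Order.TTheory GRing.Theory Num.Theory.
Local Open Scope classical_set_scope.
Local Open Scope ring_scope.

Lemma nonaut_iterS {X : Type} (f : nat -> X -> X) i m x :
  nonaut_iter f i m.+1 x = nonaut_iter f i.+1 m (f i x).
Proof.
elim: m => [|m IH]; first by rewrite /= addn0.
transitivity (f (i + m.+1)%N (nonaut_iter f i m.+1 x)); first by [].
by rewrite IH /= addnS addSn.
Qed.

Lemma itin {X : Type} (f : nat -> X -> X) (N : nat) (V : 'I_N -> set X)
  (hne : forall i, V i !=set0)
  (hcov : forall i n, \bigcup_(j in [set: 'I_N]) V j `<=` f n @` V i)
  (s : nat -> 'I_N) M : forall i, exists x, forall m, (m <= M)%N ->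
    V (s (i + m)%N) (nonaut_iter f i m x).
Proof.
elim: M => [|M IH] i.
  have [x Hx] := hne (s i); exists x => m; rewrite leqn0 => /eqP -> /=.
  by rewrite addn0.
have [y Hy] := IH i.+1.
have : (\bigcup_(j in [set: 'I_N]) V j) y.
  by exists (s i.+1) => //; have := Hy 0%N isT; rewrite addn0.
move=> /(hcov (s i) i) [x Vx fxy]; exists x => -[|m] Hm.
  by rewrite addn0.
by rewrite nonaut_iterS fxy addnS -addSn; apply: Hy.
Qed.

Lemma a_inj (a : nat -> nat) : (forall i j, (i < j)%N -> (a i < a j)%N) ->
  forall i j, a i = a j -> i = j.
Proof.
move=> ha i j e; case: (ltngtP i j) => // /ha; rewrite e ltnn //.
Qed.

Section Count.
Variables (X : Type) (f : nat -> X -> X) (N : nat) (V U : 'I_N -> set X) (a : nat -> nat).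
Hypothesis hne : forall i, V i !=set0.
Hypothesis hcov : forall i n, \bigcup_(j in [set: 'I_N]) V j `<=` f n @` V i.
Hypothesis ha : forall i j, (i < j)%N -> (a i < a j)%N.
Hypothesis UV : forall j k x, V j x -> U k x -> j = k.
Variable k0 : 'I_N.

Lemma exists_pt n (w : {ffun 'I_n -> 'I_N}) :
  exists x, forall i : 'I_n, V (w i) (nonaut_iter f 0 (a i) x).
Proof.
pose s m := if [pick i : 'I_n | a i == m] is Some i then w i else k0.
have [x Hx] := @itin X f N V hne hcov s (\max_(i < n) a i) 0.
exists x => i; have := Hx (a i) (@leq_bigmax _ (fun i : 'I_n => a i) i).
rewrite add0n /s; case: pickP => [j /eqP /(@a_inj a ha) /val_inj -> //|/(_ i)].
by rewrite eqxx.
Qed.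

Lemma count_bound n k : has_subcover_card (seq_join f a (range U) n) k -> (N ^ n <= k)%N.
Proof.
move=> [g [gD gcov]].
have ch : forall w : {ffun 'I_n -> 'I_N}, {x | forall i : 'I_n, V (w i) (nonaut_iter f 0 (a i) x)}.
  by move=> w; apply: cid; apply: exists_pt.
have ch2 : forall x : X, {j : 'I_k | g j x}.
  move=> x; apply: cid; have : setT x by [].
  by rewrite -gcov => -[j _ gj]; exists j.
pose phi w := sval (ch2 (sval (ch w))).
have phi_inj : injective phi.
  move=> w w' e; apply/ffunP => i.
  have [h [hC gE]] := gD (phi w).
  have H1 := svalP (ch2 (sval (ch w))); have H2 := svalP (ch2 (sval (ch w'))).
  rewrite -/(phi w) gE in H1; rewrite -/(phi w') -e gE in H2.
  have [c _ hc] := hC i.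
  have A1 := H1 i I; have A2 := H2 i I. rewrite -hc /= in A1 A2.
  have B1 := svalP (ch w) i; have B2 := svalP (ch w') i.
  by rewrite (UV _ _ _ B1 A1) (UV _ _ _ B2 A2).
have := @leq_card _ _ phi phi_inj.
by rewrite card_ffun !card_ord.
Qed.
End Count.

Lemma min_bound (X : Type) (D : set (set X)) (k0 L : nat) :
  has_subcover_card D k0 -> (forall k, has_subcover_card D k -> (L <= k)%N) ->
  (L <= min_subcover D)%N.
Proof.
move=> h0 hL.
have ex : exists k, `[< has_subcover_card D k >] by exists k0; apply/asboolP.
case: (ex_minnP ex) => m /asboolP Hm Hmin.
have : [set k | has_subcover_card D k /\ forall m, has_subcover_card D m -> (k <= m)%N] (min_subcover D).
  apply: xgetPex; exists m; split => // m' Hm'; apply: Hmin; exact/asboolP.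
by move=> [/hL].
Qed.

Theorem theorem3p4 (R : realType) (X : metricType R) (f : nat -> X -> X)
  (N : nat) (V : 'I_N -> set X) (a : nat -> nat) :
  compact [set: X] ->
  (forall n, continuous (f n)) ->
  (2 <= N)%N ->
  (forall i, V i !=set0) ->
  (forall i, closed (V i)) ->
  (forall i j, i != j -> V i `&` V j = set0) ->
  (forall i n, \bigcup_(j in [set: 'I_N]) V j `<=` f n @` V i) ->
  (forall i j, (i < j)%N -> (a i < a j)%N) ->
  ((ln (N%:R : R))%:E <= seq_entropy f a)%E.
Proof.
move=> _ _ N2 hne hcl hdis hcov ha.
have k0 : 'I_N by exists 0%N; apply: leq_trans N2.
pose U (k : 'I_N) := [set x | forall j, j != k -> ~ V j x].
have UV : forall j k x, V j x -> U k x -> j = k.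
  move=> j k x Vj Uk; apply/eqP; apply/negPn/negP => /Uk; exact.
have Ucov : forall x, exists k, U k x.
  move=> x; case: (pselect (exists j, V j x)) => [[j Vj]|nV].
    exists j => j' /hdis Hd Vj'.
    by have : (V j' `&` V j) x by []; rewrite Hd.
  by exists k0 => j _ Vj; apply: nV; exists j.
have Uopen : forall k, open (U k).
  move=> k.
  have -> : U k = ~` \bigcup_(j in [set j | j != k]) V j.
    apply/seteqP; split => x /=.
      by move=> Ux [j /= jk Vj]; exact: Ux jk Vj.
    by move=> nx j jk Vj; apply: nx; exists j.
  rewrite openC; apply: closed_bigcup => //; exact: finite_finset.
have Cfo : finite_open_cover (range U).
  split; first exact: finite_image finite_finset.
  split; first by move=> _ [k _ <-].
  apply/seteqP; split => x // _.
  by have [k Uk] := Ucov x; exists (U k) => //; exists k.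
apply: le_trans; last first.
  by apply: ereal_sup_ubound; exists (range U).
rewrite limn_esup_lim.
apply: lime_ge; first exact: is_cvg_esups.
apply: nearW => m.
apply: le_trans; last first.
  by apply: ereal_sup_ubound; exists m.+1 => //=.
rewrite lee_fin.
set D := seq_join f a (range U) m.+1.
have hex : has_subcover_card D #|{ffun 'I_m.+1 -> 'I_N}|.
  pose T := {ffun 'I_m.+1 -> 'I_N}.
  exists (fun j : 'I_#|T| => \bigcap_(i in [set: 'I_m.+1])
     (nonaut_iter f 0 (a i) @^-1` U (enum_val j i))); split.
    by move=> j; exists (fun i => U (enum_val j i)); split => // i; exists (enum_val j i).
  have ch : forall y, {k | U k y} by move=> y; apply: cid; exact: Ucov.
  apply/seteqP; split => x // _.
  pose w : T := [ffun i : 'I_m.+1 => sval (ch (nonaut_iter f 0 (a i) x))].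
  exists (@enum_rank T w) => //; rewrite (@enum_rankK T) => i _ /=.
  rewrite ffunE; exact: (svalP (ch (nonaut_iter f 0 (a i) x))).
have Hb := @min_bound _ D _ _ hex (@count_bound X f N V U a hne hcov ha UV k0 m.+1).
have N0 : (0 < N%:R :> R) by rewrite ltr0n; apply: leq_trans N2.
rewrite ler_pdivlMl ?ltr0n //.
idtac.
rewrite mulr_natl -lnXn // ler_ln ?posrE ?exprn_gt0 //.
  by rewrite -natrX ler_nat.
by rewrite ltr0n (leq_trans _ Hb) // expn_gt0 (leq_trans _ N2).
Qed.
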